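(* Let $l_H(s)$, $s\in\mathcal S$, be the codeword lengths of a Huffman code for $p$, $L_H=\sum_s p(s)l_H(s)$, and $l^{\max}_H=\max_s l_H(s)$. Then there exists an sAEDS with $N=2^{l^{\max}_H}$ states (with $N_s=2^{l^{\max}_H-l_H(s)}$) in which $l(E_{\hat x}(s))=l_H(s)$ for every $\hat x\in\mathcal X$ and $s\in\mathcal S$; consequently its average code length equals $L_H$ for every stationary distribution $Q$. In particular the optimal sAEDS with $2^{l^{\max}_H}$ states has average code length at most $L_H$.
   Context: Let $\mathcal S$ be a finite alphabet with $|\mathcal S|\ge 2$ and $p=\{p(s)\}$ a probability distribution with $p(s)>0$ for all $s$ (i.i.d. source). $\mathcal B=\{0,1\}^*$ (including the empty word), $l(\beta)$ the word length, $\lg=\log_2$. An AEDS with finite state set $\mathcal X$, $|\mathcal X|=N$, consists of maps $E_{\hat x}:\mathcal S\to\mathcal B$ and $F^-_{\hat x}:\mathcal S\to\mathcal X$ ($\hat x\in\mathcal X$) such that for every $x\in\mathcal X$ the words $E_{\hat x}(s)$ over all pairs $(\hat x,s)$ with $F^-_{\hat x}(s)=x$ are pairwise distinct and form a prefix-free set. The state chain is the Markov chain on $\mathcal X$ moving from $\hat x$ to $F^-_{\hat x}(s)$ with probability $p(s)$; for a stationary distribution $Q$ the average code length is $L=\sum_{\hat x}\sum_s p(s)Q(\hat x)l(E_{\hat x}(s))$. A state-divided AEDS (sAEDS) is an AEDS for which the sets $\mathcal X_s=\{F^-_{\hat x}(s):\hat x\in\mathcal X\}$, $s\in\mathcal S$,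 are pairwise disjoint with union $\mathcal X$; $N_s=|\mathcal X_s|$. For $x\in\mathcal X_s$, $\mathcal F^+_x=\{\hat x: F^-_{\hat x}(s)=x\}$; for each $s$ these sets partition $\mathcal X$. The optimal sAEDS with $N$ states is one minimizing $L$ among sAEDSs with $N$ states. *)

(* Defs.v *)
From mathcomp Require Import all_boot all_order all_algebra.
Set Implicit Arguments. Unset Strict Implicit. Unset Printing Implicit Defensive.
Import Order.TTheory GRing.Theory Num.Theory.
Local Open Scope ring_scope.

(* Huffman codeword lengths, positionally: [huffman ws ls] holds when ls is the
   list of codeword lengths of some Huffman code (any tie-breaking) for the
   weights ws. *)
Inductive huffman (R : realFieldType) : seq R -> seq nat -> Prop :=
| huff_two (a b : R) : huffman [:: a; b] [:: 1%N; 1%N]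
| huff_merge (a b : R) (ws : seq R) (l : nat) (ls : seq nat) :
    all (fun w => (a <= w) && (b <= w)) ws ->
    huffman (a + b :: ws) (l :: ls) ->
    huffman [:: a, b & ws] [:: l.+1, l.+1 & ls]
| huff_perm (ws ws' : seq R) (ls ls' : seq nat) :
    huffman ws ls -> size ws' = size ls' ->
    perm_eq (zip ws ls) (zip ws' ls') -> huffman ws' ls'.

Definition is_AEDS (S X : finType) (E : X -> S -> seq bool) (F : X -> S -> X) : Prop :=
  forall (x : X) (a b : X * S),
    F a.1 a.2 = x -> F b.1 b.2 = x -> a <> b -> ~~ prefix (E a.1 a.2) (E b.1 b.2).

Definition Xset (S X : finType) (F : X -> S -> X) (s : S) : {set X} :=
  [set F xh s | xh : X].

Definition is_sAEDS (S X : finType) (E : X -> S -> seq bool) (F : X -> S -> X) : Prop :=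
  [/\ is_AEDS E F,
      (forall s1 s2 : S, s1 != s2 -> [disjoint Xset F s1 & Xset F s2]) &
      \bigcup_(s : S) Xset F s = [set: X]].

Definition stationary (R : realFieldType) (S X : finType) (p : S -> R)
    (F : X -> S -> X) (Q : X -> R) : Prop :=
  [/\ forall x, 0 <= Q x,
      \sum_(x : X) Q x = 1 &
      forall x, Q x = \sum_(xh : X) \sum_(s : S | F xh s == x) Q xh * p s].

Definition avg_len (R : realFieldType) (S X : finType) (p : S -> R)
    (E : X -> S -> seq bool) (Q : X -> R) : R :=
  \sum_(xh : X) \sum_(s : S) p s * Q xh * (size (E xh s))%:R.

Definition optimal_sAEDS (R : realFieldType) (S : finType) (p : S -> R) (N : nat)
    (X : finType) (E : X -> S -> seq bool) (F : X -> S -> X) (Q : X -> R) : Prop :=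
  [/\ is_sAEDS E F, #|X| = N, stationary p F Q &
      forall (X' : finType) (E' : X' -> S -> seq bool) (F' : X' -> S -> X') (Q' : X' -> R),
        is_sAEDS E' F' -> #|X'| = N -> stationary p F' Q' ->
        avg_len p E Q <= avg_len p E' Q'].

(* Main.v *)
Require Import Defs.
From mathcomp Require Import all_boot all_order all_algebra.
Import Order.TTheory GRing.Theory Num.Theory.
Local Open Scope ring_scope.
From mathcomp Require Import zify.
Set Implicit Arguments. Unset Strict Implicit. Unset Printing Implicit Defensive.

Definition compat (a b : seq bool) := prefix a b || prefix b a.

Definition codeok (cs : seq (seq bool)) :=
  [/\ uniq cs, {in cs &, forall a b, compat a b -> a = b},
      forall w, exists2 d, d \in cs & compat d w & [::] \notin cs].

Lemma prefix_size (a b : seq bool) : prefix a b -> (size a <= size b)%N.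
Proof. by move=> /prefixP[t ->]; rewrite size_cat leq_addr. Qed.

Lemma prefix_eqsize (a b : seq bool) : size a = size b -> prefix a b -> a = b.
Proof. by move=> e; rewrite prefixE e take_size => /eqP. Qed.

Lemma prefix_both (u v w : seq bool) : prefix u w -> prefix v w -> compat u v.
Proof.
rewrite /compat; rewrite !(prefixE _ w) => /eqP hu /eqP hv.
case: (leqP (size u) (size v)) => h.
  by apply/orP; left; rewrite prefixE -{1}hv take_takel // hu.
by apply/orP; right; rewrite prefixE -{1}hu take_takel ?hv // ltnW.
Qed.

Lemma prefix_rcons_r (u y : seq bool) b :
  prefix u (rcons y b) = prefix u y || (u == rcons y b).
Proof.
elim: y u => [|a y IH] [|x u] //=.
by rewrite IH eqseq_cons andb_orr.
Qed.

Lemma compat_rcons (c d : seq bool) x : compat (rcons c x) d -> compat c d.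
Proof.
rewrite /compat prefix_rcons_r => /orP[|/orP[]].
- by rewrite -cats1 => /catl_prefix ->.
- by move=> ->; rewrite orbT.
- by move=> /eqP ->; rewrite prefix_rcons.
Qed.

Lemma compat_sym a b : compat a b = compat b a.
Proof. by rewrite /compat orbC. Qed.

Lemma codeok_perm cs cs' : perm_eq cs cs' -> codeok cs -> codeok cs'.
Proof.
move=> pe [u pf cm ne]; have mem := perm_mem pe; split.
- by rewrite -(perm_uniq pe).
- by move=> a b; rewrite -!mem; apply: pf.
- by move=> w; case: (cm w) => d; rewrite mem => ??; exists d.
- by rewrite -mem.
Qed.

Lemma huff_code (R : realFieldType) (ws : seq R) ls : huffman ws ls ->
  size ws = size ls /\ exists cs, map size cs = ls /\ codeok cs.
Proof.
elim=> {ws ls}.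
- move=> a b; split => //; exists [:: [:: false]; [:: true]]; split => //; split => //.
  + move=> x y; rewrite !inE => /orP[]/eqP-> /orP[]/eqP-> //.
  + case=> [|b' w]; first by exists [:: false]; rewrite ?inE.
    by exists [:: b']; [case: b'; rewrite !inE | rewrite /compat /= eqxx prefix0s].
- move=> a b ws l ls _ _ [/= [sz] [cs [ecs [u pf cm ne]]]]; split; first by rewrite sz.
  case: cs ecs u pf cm ne => [|c rest] //= [ec er] /andP[cnr ur] pf cm ne.
  have pfc d : d \in rest -> compat c d -> False.
    move=> dr /(pf c d); rewrite !inE eqxx dr orbT => /(_ isT isT) cd.
    by move: cnr; rewrite cd dr.
  have rnr x : rcons c x \notin rest.
    by apply/negP => /pfc H; apply: H; rewrite /compat prefix_rcons.
  exists [:: rcons c false, rcons c true & rest]; split; first by rewrite /= !size_rcons ec er.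
  split.
  + by rewrite /= inE negb_or !rnr ur eqseq_rcons eqxx.
  + move=> x y; rewrite !inE => hx hy.
    have aux z d : d \in rest -> compat (rcons c z) d -> False.
      by move=> dr /compat_rcons; apply: pfc.
    have aux2 z z' : compat (rcons c z) (rcons c z') -> rcons c z = rcons c z'.
      by rewrite /compat => /orP[]/prefix_eqsize; rewrite !size_rcons => h; [|symmetry]; apply: h.
    case/orP: hx => [/eqP->|/orP[/eqP->|xr]]; case/orP: hy => [/eqP->|/orP[/eqP->|yr]];
      first [ by apply: aux2 | by move=> /(aux _ _ yr) | by rewrite compat_sym => /(aux _ _ xr)
            | by apply: pf; rewrite inE ?xr ?yr orbT ].
  + move=> w; case: (cm w) => d; rewrite inE => /orP[/eqP->|dr] cd; last first.
      by exists d; rewrite // !inE dr !orbT.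
    case/orP: cd => [/prefixP[[|z t] ->]|wc].
    * by exists (rcons c false); rewrite ?inE ?eqxx // cats0 /compat prefix_rcons orbT.
    * by exists (rcons c z); [case: z; rewrite !inE eqxx ?orbT|rewrite /compat -cat_rcons prefix_prefix].
    * exists (rcons c false); rewrite ?inE ?eqxx //.
      by rewrite /compat (prefix_trans wc (prefix_rcons _ _)) orbT.
  + by move: ne; rewrite !inE !negb_or => /andP[_ ->]; case: (c).
- move=> ws ws' ls ls' _ [sz [cs [ecs ok]]] sz' pz; split => //.
  have pl : perm_eq ls' ls by rewrite perm_sym; apply: perm_zip2 pz.
  case/(perm_iotaP 0%N): pl => Is pI eI.
  exists [seq nth [::] cs i | i <- Is]; split.
    rewrite eI -map_comp; apply/eq_in_map => i iI /=.
    have : i \in iota 0 (size ls) by rewrite -(perm_mem pI).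
    rewrite mem_iota /=.
    by rewrite -ecs size_map => h; rewrite (nth_map [::]).
  apply: codeok_perm ok; rewrite perm_sym; apply/(perm_iotaP [::]); exists Is => //.
  by rewrite -(size_map size) ecs.
Qed.
Fixpoint qf (R : realFieldType) (S : finType) (p : S -> R) (c : S -> seq bool)
    (n : nat) (w : seq bool) : R :=
  if n is n'.+1 then
    (if w is [::] then 1 else
     \sum_(s : S) p s * (if prefix (c s) w then @qf R S p c n' (drop (size (c s)) w)
                         else if prefix w (c s) then 1 else 0))
  else 1.

Definition q (R : realFieldType) (S : finType) (p : S -> R) (c : S -> seq bool)
  (w : seq bool) : R := qf p c (size w) w.

Lemma qf_ge0 (R : realFieldType) (S : finType) (p : S -> R) c n w :
  (forall s, 0 <= p s) -> 0 <= qf p c n w.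
Proof.
move=> p0; elim: n w => [|n IH] [|b w] //=.
apply: sumr_ge0 => s _; apply: mulr_ge0 => //.
by case: ifP => _ //; case: ifP.
Qed.

Lemma qf_fuel (R : realFieldType) (S : finType) (p : S -> R) c :
  (forall s, c s != [::]) ->
  forall n m w, (size w <= n)%N -> (size w <= m)%N -> qf p c n w = qf p c m w.
Proof.
move=> cne; elim=> [|n IH] [|m] w //=.
- by case: w.
- by case: w.
case: w => [|b w] //= hn hm; apply: eq_bigr => s _.
case: ifP => // pr; congr (_ * _); apply: IH.
  rewrite size_drop; have := cne s; case: (c s) => //= ? ? _; lia.
rewrite size_drop; have := cne s; case: (c s) => //= ? ? _; lia.
Qed.

Lemma q_nil (R : realFieldType) (S : finType) (p : S -> R) c : q p c [::] = 1.
Proof. by []. Qed.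

Lemma qE (R : realFieldType) (S : finType) (p : S -> R) c :
  (forall s, c s != [::]) -> forall w, w != [::] ->
  q p c w = \sum_(s : S) p s * (if prefix (c s) w then q p c (drop (size (c s)) w)
                                else if prefix w (c s) then 1 else 0).
Proof.
move=> cne [|b w] // _; rewrite /q /=; apply: eq_bigr => s _.
case: ifP => // _; congr (_ * _); apply: qf_fuel => //.
rewrite size_drop; have := cne s; case: (c s) => //= ? ? _; lia.
Qed.

Lemma prefix_rcons_l (y : seq bool) (d : bool) t b :
  prefix (rcons y b) (y ++ d :: t) = (b == d).
Proof. by rewrite -cats1 prefix_catr // eqxx /= prefix0s andbT. Qed.

Lemma q_split (R : realFieldType) (S : finType) (p : S -> R) c :
  (forall s, c s != [::]) -> \sum_(s : S) p s = 1 ->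
  forall y, q p c (rcons y false) + q p c (rcons y true) = q p c y.
Proof.
move=> cne p1 y; move: {2}(size y) (leqnn (size y)) => n; elim: n y => [|n IH] y.
  rewrite leqn0 => /nilP -> /=.
  rewrite q_nil !qE // -big_split /=; rewrite -[in RHS]p1; apply: eq_bigr => s _; rewrite -mulrDr.
  have := cne s; case: (c s) => [|d t] //= _.
  rewrite !prefix0s !andbT; case: d; case: t => [|? ?] /=; rewrite ?q_nil ?add0r ?addr0 ?mulr1 //.
move=> hy; have [ye|yne] := eqVneq y [::].
  by apply: IH; rewrite ye.
have rne b : rcons y b != [::] by case: (y).
rewrite (@qE _ _ p c cne _ yne) !(@qE _ _ p c cne _ (rne _)).
rewrite -big_split /=; apply: eq_bigr => s _; rewrite -mulrDr; congr (_ * _).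
have sne := cne s.
have [pcy|npcy] := boolP (prefix (c s) y).
  have ks : (size (c s) <= size y)%N by apply: prefix_size.
  rewrite !(prefix_trans pcy (prefix_rcons _ _)) !drop_rcons //; apply: IH.
  rewrite size_drop; move: sne; case: (c s) => //= ? ? _; lia.
have [pyc|npyc] := boolP (prefix y (c s)).
  case/prefixP: pyc => [[|d t] ec]; first by move: npcy; rewrite ec cats0 prefix_refl.
  rewrite ec !prefix_rcons_r !prefix_rcons_l.
  have e1 : prefix (y ++ d :: t) y = false by rewrite -ec (negbTE npcy).
  rewrite e1 /= -!cats1 !eqseq_cat // eqxx /=.
  case: t {ec e1} => [|e t]; case: d => /=; rewrite ?drop_oversize ?size_cat //= ?q_nil ?add0r ?addr0 //.
rewrite !prefix_rcons_r (negbTE npcy) /=.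
have h b : rcons y b != c s by apply: contra npyc => /eqP <-; rewrite prefix_rcons.
have h2 b : prefix (rcons y b) (c s) = false.
  by apply/negbTE; apply: contra npyc; rewrite -cats1 => /catl_prefix.
by rewrite !(eq_sym (c s)) !(negbTE (h _)) !h2 addr0.
Qed.

Lemma cyl (R : realFieldType) (S : finType) (p : S -> R) c (L : nat) :
  (forall s, c s != [::]) -> \sum_(s : S) p s = 1 ->
  forall k, (k <= L)%N -> forall y, size y = (L - k)%N ->
  \sum_(xh : L.-tuple bool | take (L - k) xh == y) q p c xh = q p c y.
Proof.
move=> cne p1; elim=> [|k IH] kL y sy.
  rewrite subn0 in sy *.
  have sy' : size y == L by rewrite sy.
  pose t : L.-tuple bool := Tuple sy'.
  rewrite (eq_bigl (fun xh => xh == t)) ?big_pred1_eq //.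
  by move=> xh; rewrite take_oversize ?size_tuple //.
have mL : (L - k.+1 < L)%N by lia.
rewrite (bigID (fun xh : L.-tuple bool => nth false xh (L - k.+1))) /=.
rewrite -(q_split cne p1 y) [RHS]addrC; congr (_ + _).
  rewrite -(IH (ltnW kL) (rcons y true)); last by rewrite size_rcons sy; lia.
  apply: eq_bigl => xh; have e : (L - k = (L - k.+1).+1)%N by lia.
  by rewrite e (take_nth false) ?size_tuple // eqseq_rcons eqb_id.
rewrite -(IH (ltnW kL) (rcons y false)); last by rewrite size_rcons sy; lia.
apply: eq_bigl => xh; have e : (L - k = (L - k.+1).+1)%N by lia.
by rewrite e (take_nth false) ?size_tuple // eqseq_rcons eqbF_neg.
Qed.
Lemma map_index (T : eqType) (B : Type) (s : seq T) (cs : seq B) b0 :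
  uniq s -> size cs = size s -> cs = map (fun x => nth b0 cs (index x s)) s.
Proof.
elim: s cs => [|x s IH] [|d cs] //= /andP[xs us] [sz].
rewrite eqxx /=; congr (_ :: _); rewrite {1}(IH cs us sz).
apply/eq_in_map => y ys /=; case: eqP => [e|//]; by move: xs; rewrite e ys.
Qed.

Lemma avg_lemma (R : realFieldType) (S X : finType) (p : S -> R) (lH : S -> nat)
  (E : X -> S -> seq bool) (F : X -> S -> X) (Q : X -> R) :
  (forall xh s, size (E xh s) = lH s) -> stationary p F Q ->
  avg_len p E Q = \sum_(s : S) p s * (lH s)%:R.
Proof.
move=> hE [_ Q1 _]; rewrite /avg_len exchange_big /=; apply: eq_bigr => s _.
under eq_bigr do rewrite hE mulrAC.
by rewrite -mulr_sumr Q1 mulr1.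
Qed.

Unset Implicit Arguments.
Theorem theorem3 (R : realFieldType) (S : finType) (p : S -> R) (lH : S -> nat) :
  (2 <= #|S|)%N ->
  (forall s, 0 < p s) ->
  \sum_(s : S) p s = 1 ->
  huffman [seq p s | s <- enum S] [seq lH s | s <- enum S] ->
  let lmax := (\max_(s : S) lH s)%N in
  let LH := \sum_(s : S) p s * (lH s)%:R in
  (exists (X : finType) (E : X -> S -> seq bool) (F : X -> S -> X),
      [/\ is_sAEDS E F,
          #|X| = (2 ^ lmax)%N,
          (forall s, #|Xset F s| = (2 ^ (lmax - lH s))%N),
          (forall xh s, size (E xh s) = lH s) &
          (forall Q : X -> R, stationary p F Q -> avg_len p E Q = LH)])
  /\ (forall (X : finType) (E : X -> S -> seq bool) (F : X -> S -> X) (Q : X -> R),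
        optimal_sAEDS p (2 ^ lmax)%N E F Q -> avg_len p E Q <= LH).
Proof.
move=> S2 p0 p1 hh lmax LH.
have [_ [cs [ecs [ucs pfx cmp nen]]]] := @huff_code _ _ _ hh.
pose c s := nth [::] cs (index s (enum S)).
have szcs : size cs = size (enum S) by rewrite -(size_map size) ecs size_map.
have csE : cs = map c (enum S) by apply: map_index; rewrite ?enum_uniq.
have cin s : c s \in cs by rewrite csE map_f ?mem_enum.
have szc s : size (c s) = lH s.
  have : map size (map c (enum S)) = map lH (enum S) by rewrite -csE.
  by rewrite -map_comp => /eq_in_map; apply; rewrite mem_enum.
have cne s : c s != [::] by apply: contraNneq nen => <-; apply: cin.
have idx s : (index s (enum S) < size cs)%N by rewrite szcs index_mem mem_enum.
have cinj s t : compat (c s) (c t) -> s = t.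
  move=> /(pfx _ _ (cin s) (cin t)) /eqP; rewrite /c nth_uniq // => /eqP.
  by move/(congr1 (nth s (enum S))); rewrite !nth_index ?mem_enum.
have uniqp s t w : prefix (c s) w -> prefix (c t) w -> s = t.
  by move=> a b; apply: cinj; apply: prefix_both a b.
have lHle s : (lH s <= lmax)%N := leq_bigmax s.
have lH1 s : (0 < lH s)%N by rewrite -szc lt0n size_eq0 cne.
have /card_gt0P[s0 _] : (0 < #|S|)%N by apply: leq_trans S2.
have lmax1 : (0 < lmax)%N by apply: leq_trans (lH1 s0) (lHle s0).
have pre (x : lmax.-tuple bool) : exists s, prefix (c s) x.
  case: (cmp x) => d; rewrite csE => /mapP[s _ ->] /orP[h|h]; exists s => //.
  have := prefix_size h; rewrite size_tuple szc => h2.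
  by rewrite -(@prefix_eqsize x (c s)) ?prefix_refl // size_tuple szc; apply/eqP; rewrite eqn_leq h2 lHle.
pose F (xh : lmax.-tuple bool) s : lmax.-tuple bool := insubd xh (c s ++ take (lmax - lH s) xh).
have valF xh s : val (F xh s) = c s ++ take (lmax - lH s) xh.
  rewrite insubdK // -topredE /= size_cat size_takel ?size_tuple ?leq_subr // szc.
  by apply/eqP; rewrite subnKC.
pose E (xh : lmax.-tuple bool) s := drop (lmax - lH s) xh.
have szE xh s : size (E xh s) = lH s by rewrite size_drop size_tuple subKn.
have prefF xh s : prefix (c s) (val (F xh s)) by rewrite valF prefix_prefix.
have aeds : is_AEDS E F.
  move=> x [xa sa] [xb sb] /= ha hb ne.
  have esb : sa = sb by apply: (uniqp _ _ (val x)); [rewrite -ha | rewrite -hb]; apply: prefF.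
  subst sb.
  have et : take (lmax - lH sa) xa = take (lmax - lH sa) xb.
    have := congr1 val (etrans ha (esym hb)); rewrite !valF => /eqP.
    by rewrite eqseq_cat // => /andP[_ /eqP].
  apply/negP => pr; apply: ne; congr (_, _); apply: val_inj; change (tval xa = tval xb).
  rewrite -(cat_take_drop (lmax - lH sa) xa) -(cat_take_drop (lmax - lH sa) xb) et.
  by move: (prefix_eqsize (etrans (szE xa sa) (esym (szE xb sa))) pr); rewrite /E => ->.
have disj s1 s2 : s1 != s2 -> [disjoint Xset F s1 & Xset F s2].
  move=> ne; rewrite -setI_eq0; apply/eqP/setP => x; rewrite !inE.
  apply/negP => /andP[/imsetP[xa _ ->] /imsetP[xb _ e]].
  have := uniqp s1 s2 (val (F xa s1)) (prefF xa s1); rewrite e => /(_ (prefF xb s2)) ee.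
  by rewrite ee eqxx in ne.
have cover : \bigcup_(s : S) Xset F s = [set: lmax.-tuple bool].
  apply/setP => x; rewrite inE; apply/bigcupP; case: (pre x) => s px.
  exists s => //; apply/imsetP.
  have sz : size (drop (lH s) x ++ nseq (lH s) false) == lmax.
    by rewrite size_cat size_drop size_nseq size_tuple subnK.
  exists (insubd x (drop (lH s) x ++ nseq (lH s) false)) => //; apply: val_inj.
  rewrite valF insubdK // take_size_cat; last by rewrite size_drop size_tuple.
  by move: px; rewrite prefixE szc => /eqP e; rewrite -e cat_take_drop.
have sA : is_sAEDS E F by split.
have cardX : #|{: lmax.-tuple bool}| = (2 ^ lmax)%N by rewrite card_tuple card_bool.
have cardXs s : #|Xset F s| = (2 ^ (lmax - lH s))%N.
  pose k := (lmax - lH s)%N.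
  pose g (y : k.-tuple bool) : lmax.-tuple bool := insubd (nseq_tuple lmax false) (c s ++ y).
  have valg y : val (g y) = c s ++ y.
    by rewrite insubdK // -topredE /= size_cat size_tuple szc subnKC.
  have -> : Xset F s = g @: [set: k.-tuple bool].
    apply/setP => x; apply/imsetP/imsetP => [[xh _ ->]|[y _ ->]].
      have sz : size (take k xh) == k by rewrite size_takel ?size_tuple ?leq_subr.
      exists (insubd (nseq_tuple k false) (take k xh)) => //; apply: val_inj.
      by rewrite valF valg insubdK.
    have sz : size (y ++ nseq (lH s) false) == lmax.
      by rewrite size_cat size_nseq size_tuple subnK.
    exists (insubd (nseq_tuple lmax false) (y ++ nseq (lH s) false)) => //; apply: val_inj.
    by rewrite valF valg insubdK // take_size_cat // size_tuple.
  rewrite card_imset ?cardsT ?card_tuple ?card_bool //.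
  move=> y1 y2 /(congr1 val); rewrite !valg => /eqP; rewrite eqseq_cat // => /andP[_ /eqP].
  by move=> e; apply: val_inj.
pose Q (x : lmax.-tuple bool) := q p c x.
have st : stationary p F Q.
  split.
  - by move=> x; apply: qf_ge0 => s; apply: ltW.
  - have := @cyl _ _ p c lmax cne p1 lmax (leqnn _) [::]; rewrite subnn => /(_ erefl) h.
    rewrite -(q_nil p c) -h; apply: eq_bigl => xh; by rewrite take0 eqxx.
  - move=> x; case: (pre x) => sg px.
    have xE : tval x = c sg ++ drop (lH sg) x.
      by move: px; rewrite prefixE szc => /eqP e; rewrite -{1}e cat_take_drop.
    have xne : tval x != [::] by rewrite -size_eq0 size_tuple -lt0n.
    rewrite /Q (qE p cne xne) (bigD1 sg) //= px big1 ?addr0; last first.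
      move=> s ne; case: ifP => [ps|_]; first by rewrite (uniqp _ _ _ ps px) eqxx in ne.
      case: ifP => [pxs|_]; last by rewrite mulr0.
      have e : tval x = c s.
        by apply: (prefix_eqsize _ pxs); apply/eqP; rewrite eqn_leq prefix_size // size_tuple szc lHle.
      by move: ne; rewrite (uniqp s sg x) ?eqxx // e prefix_refl.
    rewrite (eq_bigr (fun xh : lmax.-tuple bool => if take (lmax - lH sg) xh == drop (lH sg) x
                                 then q p c xh * p sg else 0)); last first.
      move=> xh _; rewrite big_mkcond (bigD1 sg) //= big1 ?addr0; last first.
        move=> s ne; case: eqP => // e.
        by have := uniqp s sg x; rewrite -e prefF => /(_ isT); rewrite e px => /(_ isT) ee; rewrite ee eqxx in ne.
      by rewrite -val_eqE valF /= {1}xE eqseq_cat // eqxx.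
    rewrite -big_mkcond /= -mulr_suml mulrC szc; congr (_ * _).
    have sd : size (drop (lH sg) x) = (lmax - lH sg)%N by rewrite size_drop size_tuple.
    by rewrite (@cyl _ _ p c lmax cne p1 (lH sg) (lHle sg) _ sd).
split.
  exists (lmax.-tuple bool), E, F; split => //.
  by move=> Q0 st0; apply: avg_lemma szE st0.
move=> X0 E0 F0 Q0 [_ _ _ opt].
apply: le_trans (opt _ E F Q sA cardX st) _.
by rewrite (avg_lemma szE st).
Qed.
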